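(* Consider the balanced regret multi-representative selection problem \[\min_{\pmb x\in\mathcal X}\ \max_{\pmb\delta\in\Delta(\Gamma),\,\pmb y\in\mathcal X}\ \min_{\pmb\epsilon\in\Delta(\Gamma')}\ \sum_{i\in[n]}(\hat c_i+d_i\delta_i+d_i\epsilon_i)(x_i-y_i),\quad \mathcal X=\Big\{\pmb x\in\{0,1\}^n:\sum_{i\in T_\ell}x_i=p_\ell\ \forall\ell\in[L]\Big\}.\] Let $\ell\in[L]$ and let $i,j\in T_\ell$ be two items with $\hat c_i\le\hat c_j$ and $\hat c_i+d_i\le\hat c_j+d_j$. Then there is an optimal solution $\pmb x$ with $x_i\ge x_j$.
   Context: $[n]=\{1,\dots,n\}$; $T_1\cup\dots\cup T_L=[n]$ is a partition and $p_\ell\le|T_\ell|$ are integers; $\hat c_i\ge0$, $d_i\ge0$; $\Gamma,\Gamma'\ge0$ are integers and $\Delta(k)=\{\pmb\delta\in\{0,1\}^n:\sum_i\delta_i\le k\}$. *)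

(* Defs.v *)
From mathcomp Require Import all_boot all_order all_algebra.
Set Implicit Arguments. Unset Strict Implicit. Unset Printing Implicit Defensive.
Import Order.TTheory GRing.Theory Num.Theory.
Local Open Scope ring_scope.

Notation bvec n := {ffun 'I_n -> bool}.

Definition bzero (n : nat) : bvec n := [ffun _ => false].

Definition Delta (n k : nat) : {set bvec n} :=
  [set dl : bvec n | (\sum_(i < n) (dl i : nat) <= k)%N].

Definition feas (n L : nat) (T : 'I_L -> {set 'I_n}) (p : 'I_L -> nat)
  : {set bvec n} :=
  [set x : bvec n | [forall l : 'I_L, (\sum_(i in T l) (x i : nat))%N == p l]].

Section Obj.
Variables (R : realFieldType) (n L : nat) (T : 'I_L -> {set 'I_n})
  (p : 'I_L -> nat) (c d : 'I_n -> R) (Gam Gam' : nat).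

Definition inner (x dl y e : bvec n) : R :=
  \sum_(i < n) (c i + d i * (dl i)%:R + d i * (e i)%:R) * ((x i)%:R - (y i)%:R).

(* min over eps in Delta(Gam'); the seed value (eps = 0) belongs to Delta(Gam'),
   so this is exactly the minimum. *)
Definition innermin (x dl y : bvec n) : R :=
  \big[Num.min/inner x dl y (bzero n)]_(e in Delta n Gam') inner x dl y e.

(* max over delta in Delta(Gam), y in X; the seed value (delta = 0, y = x) belongs
   to the index set whenever x is in X, so this is exactly the maximum for x in X. *)
Definition obj (x : bvec n) : R :=
  \big[Num.max/innermin x (bzero n) x]_(q : bvec n * bvec n |
        (q.1 \in Delta n Gam) && (q.2 \in feas T p)) innermin x q.1 q.2.
End Obj.

(* Main.v *)
Require Import Defs.
From mathcomp Require Import all_boot all_order all_algebra.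
From mathcomp Require Import ring lra.
Import Order.TTheory GRing.Theory Num.Theory.
Local Open Scope ring_scope.

Section Aux.
Variables (R : realFieldType) (n L : nat) (T : 'I_L -> {set 'I_n})
  (p : 'I_L -> nat) (c d : 'I_n -> R) (Gam Gam' : nat).
Variables (l : 'I_L) (i j : 'I_n).
Hypothesis hdisj : forall l1 l2 : 'I_L, l1 != l2 -> [disjoint T l1 & T l2].
Hypothesis hd : forall i, 0 <= d i.
Hypotheses (hi : i \in T l) (hj : j \in T l) (hij : i != j).
Hypotheses (hcij : c i <= c j) (hcdij : c i + d i <= c j + d j).

Definition swf (k : 'I_n) : 'I_n := if k == i then j else if k == j then i else k.

Lemma swfK : involutive swf.
Proof.
move=> k; rewrite /swf.
case: (eqVneq k i) => [->|ki]; first by rewrite eq_sym (negbTE hij) eqxx.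
case: (eqVneq k j) => [->|kj]; first by rewrite eqxx.
by rewrite (negbTE ki) (negbTE kj).
Qed.

Lemma swf_in (l' : 'I_L) k : (swf k \in T l') = (k \in T l').
Proof.
have E : (i \in T l') = (j \in T l').
  case: (eqVneq l l') => [<-|nl]; first by rewrite hi hj.
  by rewrite (disjointFr (hdisj _ _ nl) hi) (disjointFr (hdisj _ _ nl) hj).
rewrite /swf; case: (eqVneq k i) => [->|ki]; first by rewrite E.
by case: (eqVneq k j) => [->|kj].
Qed.

Definition sw (v : bvec n) : bvec n := [ffun k => v (swf k)].

Lemma sw_feas v : v \in feas T p -> sw v \in feas T p.
Proof.
rewrite !inE => /forallP H; apply/forallP => l'.
rewrite -(eqP (H l')).
rewrite [X in _ == X](reindex_inj (can_inj swfK)) /=.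
apply/eqP; apply: eq_big => k; first by rewrite swf_in.
by rewrite ffunE.
Qed.

Lemma split2 (V : Type) (idx : V) (op : Monoid.com_law idx) (F : 'I_n -> V) :
  \big[op/idx]_(k < n) F k =
  op (F i) (op (F j) (\big[op/idx]_(k | (k != i) && (k != j)) F k)).
Proof.
rewrite (bigD1 i) //= (bigD1 j) //=; by rewrite eq_sym.
Qed.

Definition dsh (dl : bvec n) : bvec n :=
  [ffun k => if k == i then false else if k == j then dl i else dl k].
Definition esh (y e : bvec n) : bvec n :=
  [ffun k => if k == i then false else if k == j then y j && (e i || e j) else e k].

Lemma sum_sh (v w : bvec n) (K : nat) :
  (w i + w j <= v i + v j)%N ->
  (forall k, k != i -> k != j -> w k = v k) ->
  v \in Delta n K -> w \in Delta n K.
Proof.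
move=> h1 h2; rewrite !inE !split2 => h; apply: leq_trans h.
rewrite [X in (_ + (_ + X) <= _)%N](eq_bigr (fun k => (v k : nat))); last first.
  by move=> k /andP[ki kj]; rewrite h2.
rewrite !addnA; apply: leq_trans (leq_add h1 (leqnn _)) _; rewrite -addnA; exact: leqnn.
Qed.

Lemma bzero_Delta K : bzero n \in Delta n K.
Proof. by rewrite inE big1 // => k _; rewrite ffunE. Qed.

Lemma innermin_le x dl y e : e \in Delta n Gam' ->
  innermin c d Gam' x dl y <= inner c d x dl y e.
Proof. by move=> he; rewrite /innermin (bigD1 e) //= ge_min lexx. Qed.

Lemma le_innermin x dl y m :
  (forall e, e \in Delta n Gam' -> m <= inner c d x dl y e) ->
  m <= innermin c d Gam' x dl y.
Proof.
move=> H; apply: (big_ind (fun v => m <= v)).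
- exact: H (bzero_Delta _).
- by move=> a b ha hb; rewrite le_min ha hb.
- exact: H.
Qed.

Lemma le_obj x q m : q.1 \in Delta n Gam -> q.2 \in feas T p ->
  m <= innermin c d Gam' x q.1 q.2 -> m <= obj T p c d Gam Gam' x.
Proof.
move=> h1 h2 hm; rewrite /obj (bigD1 q) /=; last by rewrite h1 h2.
by rewrite le_max hm.
Qed.

Lemma obj_le x m : x \in feas T p ->
  (forall q : bvec n * bvec n, q.1 \in Delta n Gam -> q.2 \in feas T p ->
     innermin c d Gam' x q.1 q.2 <= m) -> obj T p c d Gam Gam' x <= m.
Proof.
move=> hx H; apply: (big_ind (fun v => v <= m)).
- exact: (H (bzero n, x) (bzero_Delta _) hx).
- by move=> a b ha hb; rewrite ge_max ha hb.
- by move=> q /andP[]; exact: H.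
Qed.

Lemma key (ci cj di dj : R) (yi yj dli dlj ei ej : bool) :
  0 <= di -> 0 <= dj -> ci <= cj -> ci + di <= cj + dj ->
  (ci + di * (dli : nat)%:R + di * 0) * ((true : nat)%:R - (yi : nat)%:R) +
  (cj + dj * (dlj : nat)%:R + dj * ((yj && (ei || ej)) : nat)%:R) *
  ((false : nat)%:R - (yj : nat)%:R) <=
  (ci + di * 0 + di * (ei : nat)%:R) * ((false : nat)%:R - (yj : nat)%:R) +
  (cj + dj * (dli : nat)%:R + dj * (ej : nat)%:R) * ((true : nat)%:R - (yi : nat)%:R).
Proof.
move=> hdi hdj h1 h2.
case: yi; case: yj; case: dli; case: dlj; case: ei; case: ej;
  rewrite /= ?mulr1 ?mulr0 ?addr0 ?subr0 ?sub0r ?subrr ?mulr0 ?mulrN1 ?mulr1 ?addr0 ?add0r; lra.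
Qed.

Lemma swap_obj x : x \in feas T p -> x i = false -> x j = true ->
  obj T p c d Gam Gam' (sw x) <= obj T p c d Gam Gam' x.
Proof.
move=> xf xi xj.
apply: obj_le; first exact: sw_feas.
move=> [dl y] /= hdl hy.
apply: (@le_obj _ (dsh dl, sw y)) => /=.
- apply: (sum_sh dl) => //.
    by rewrite !ffunE eqxx eq_sym (negbTE hij) eqxx; case: (dl i); case: (dl j).
  by move=> k ki kj; rewrite ffunE (negbTE ki) (negbTE kj).
- exact: sw_feas.
apply: le_innermin => e he.
apply: (le_trans (innermin_le _ _ _ (esh y e) _)).
  apply: (sum_sh e) => //.
    by rewrite !ffunE eqxx eq_sym (negbTE hij) eqxx; case: (e i); case: (e j); case: (y j).
  by move=> k ki kj; rewrite ffunE (negbTE ki) (negbTE kj).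
rewrite /inner !split2.
set S1 := (X in _ + (_ + X) <= _).
set S2 := (X in _ <= _ + (_ + X)).
have -> : S1 = S2.
  apply: eq_bigr => k /andP[ki kj].
  by rewrite !ffunE /swf (negbTE ki) (negbTE kj).
rewrite !addrA lerD2r !ffunE /swf !eqxx eq_sym (negbTE hij) /= xi xj.
have hdi := hd i; have hdj := hd j; clear S1 S2.
exact: key.
Qed.

End Aux.

Theorem lemma7 (R : realFieldType) (n L : nat) (T : 'I_L -> {set 'I_n})
  (p : 'I_L -> nat) (c d : 'I_n -> R) (Gam Gam' : nat)
  (hdisj : forall l1 l2 : 'I_L, l1 != l2 -> [disjoint T l1 & T l2])
  (hcover : \bigcup_(l < L) T l = [set: 'I_n])
  (hp : forall l : 'I_L, (p l <= #|T l|)%N)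
  (hc : forall i, 0 <= c i) (hd : forall i, 0 <= d i)
  (l : 'I_L) (i j : 'I_n) (hi : i \in T l) (hj : j \in T l) (hij : i != j)
  (hcij : c i <= c j) (hcdij : c i + d i <= c j + d j) :
  exists x : bvec n,
    [/\ x \in feas T p,
        (forall x' : bvec n, x' \in feas T p ->
            obj T p c d Gam Gam' x <= obj T p c d Gam Gam' x')
      & ((x j : nat) <= x i)%N].
Proof.
have [x0 hx0] : exists x0 : bvec n, x0 \in feas T p.
  pose S (l' : 'I_L) : {set 'I_n} := [set k | k \in take (p l') (enum (T l'))].
  have ST : forall l', S l' \subset T l'.
    move=> l'; apply/subsetP => k; rewrite inE => /mem_take.
    by rewrite mem_enum.
  exists [ffun k => [exists l', k \in S l']].
  rewrite inE; apply/forallP => l'; apply/eqP.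
  rewrite (eq_bigr (fun k => if k \in S l' then 1%N else 0%N)); last first.
    move=> k kT; rewrite ffunE.
    have -> : [exists l'', k \in S l''] = (k \in S l').
      apply/existsP/idP => [[l'' hk]|hk]; last by exists l'.
      case: (eqVneq l'' l') => [<-//|nl].
      have := (subsetP (ST l'')) k hk => kl''.
      by rewrite (disjointFr (hdisj _ _ nl) kl'') in kT.
    by case: (k \in S l').
  rewrite -big_mkcondr sum1_card.
  rewrite (eq_card (B := S l')); last first.
    move=> k; rewrite [in LHS]unfold_in /=.
    case: (boolP (k \in S l')) => hk; last by rewrite andbF.
    by rewrite (subsetP (ST l') k hk).
  rewrite cardsE (card_uniqP _) ?take_uniq ?enum_uniq // size_take -cardE.
  by case: ltnP => // h; apply/eqP; rewrite eqn_leq h hp.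
have [xm hxm xmin] : exists2 xm, xm \in feas T p &
    forall x', x' \in feas T p -> obj T p c d Gam Gam' xm <= obj T p c d Gam Gam' x'.
  case: (arg_minP (fun x => obj T p c d Gam Gam' x) hx0) => xm h1 h2.
  by exists xm.
case: (boolP (xm j <= xm i)%N) => hle; first by exists xm.
have xmi : xm i = false by move: hle; case: (xm i); case: (xm j).
have xmj : xm j = true by move: hle; case: (xm i); case: (xm j).
exists (@sw n i j xm); split.
- exact: (sw_feas _ _ _ _ _ _ _ hdisj hi hj hij _ hxm).
- move=> x' hx'; apply: le_trans (xmin _ hx').
  exact: (swap_obj _ _ _ _ _ _ _ _ _ _ _ _ hdisj hd hi hj hij hcij hcdij _ hxm xmi xmj).
- by rewrite ffunE /swf eqxx eq_sym (negbTE hij) xmi.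
Qed.
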